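(* Let $\mathsf M$ be an oriented matroid with tope-pairs poset $\mathcal Q$, and let $\rho:\mathcal Q\to\mathcal Q$, $\rho(R,T)=(-T,R)$. Then $n\mapsto\rho^n$ defines an action of $\mathbb Z_4$ on the order complex $\Delta(\mathcal Q)$ by simplicial automorphisms, and hence a simplicial action of $\mathbb Z_4$ on $|\mathcal Q|$.
   Context: Topes of an oriented matroid on ground set $E$ are its maximal covectors, sign vectors in $\{+,-,0\}^E$; $-T$ is componentwise negation. The separating set is $S(X,Y)=\{e\in E: X_e=-Y_e\neq0\}$; for a tope $B$, $T\le_B R$ iff $S(B,T)\subseteq S(B,R)$. The tope-pairs poset $\mathcal Q$ is $\mathcal T\times\mathcal T$ ($\mathcal T$ the set of topes) with $(T,R)\le(T',R')$ iff $T\le_{T'}R\le_{T'}R'$. $\Delta(\mathcal Q)$ is the abstract simplicial complex whose simplices are the chains of $\mathcal Q$, and $|\mathcal Q|$ is its geometric realization. *)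

(* Defs.v *)
From HB Require Import structures.
From mathcomp Require Import all_boot all_order all_algebra.
From mathcomp Require Import reals.
Set Implicit Arguments. Unset Strict Implicit. Unset Printing Implicit Defensive.
Import Order.TTheory GRing.Theory Num.Theory.

(* Signs {+,-,0} are encoded as option bool:
   Some true = +, Some false = -, None = 0. *)
Definition signvec (E : finType) := {ffun E -> option bool}.

Section SignVectors.
Variable E : finType.

Definition zerov : signvec E := [ffun => None].
Definition negv (X : signvec E) : signvec E := [ffun e => omap negb (X e)].
Definition compv (X Y : signvec E) : signvec E :=
  [ffun e => if X e is Some b then Some b else Y e].
Definition sep (X Y : signvec E) : {set E} :=
  [set e | (X e != None) && (X e == omap negb (Y e))].
Definition conf_le (X Y : signvec E) : bool :=
  [forall e, (X e == None) || (X e == Y e)].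
End SignVectors.

(* Oriented matroid on the ground set E, given by its set of covectors
   (covector axioms (V0)-(V3)). *)
Record oriented_matroid (E : finType) := OrientedMatroid {
  covectors : {set signvec E};
  om_zero : zerov E \in covectors;
  om_neg : forall X, X \in covectors -> negv X \in covectors;
  om_comp : forall X Y, X \in covectors -> Y \in covectors ->
                        compv X Y \in covectors;
  om_elim : forall X Y e, X \in covectors -> Y \in covectors -> e \in sep X Y ->
     exists2 Z, Z \in covectors &
       Z e = None /\ (forall f, f \notin sep X Y -> Z f = compv X Y f)
}.

Section TopePairs.
Variables (E : finType) (M : oriented_matroid E).

Definition topes : {set signvec E} :=
  [set T in covectors M |
     [forall X in covectors M, conf_le T X ==> (X == T)]].

Definition tope_le (B T R : signvec E) : bool := sep B T \subset sep B R.

Definition QV : {set signvec E * signvec E} := setX topes topes.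

Definition Qle (p q : signvec E * signvec E) : bool :=
  tope_le q.1 p.1 p.2 && tope_le q.1 p.2 q.2.

(* simplices of the order complex Delta(Q): the chains of Q *)
Definition is_chain (C : {set signvec E * signvec E}) : bool :=
  (C \subset QV) && [forall p in C, forall q in C, Qle p q || Qle q p].

Definition rho (p : signvec E * signvec E) : signvec E * signvec E :=
  (negv p.2, p.1).

Definition rho_act (n : 'Z_4) := iter n rho.
End TopePairs.

Definition simplicial_automorphism (T : finType) (V : {set T})
    (simplex : {set T} -> bool) (f : T -> T) : Prop :=
  [/\ {in V, forall x, f x \in V}, {in V &, injective f} &
      forall C : {set T}, C \subset V -> simplex (f @: C) = simplex C].

Local Open Scope ring_scope.

(* Geometric realization |K| of an abstract simplicial complex K whose
   vertices lie in a finite type T: points are barycentric weight functions,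
   nonnegative, summing to 1, with support a simplex. *)
Definition in_realization (R : realType) (T : finType)
    (simplex : {set T} -> bool) (x : {ffun T -> R}) : Prop :=
  [/\ forall v, 0 <= x v, \sum_v x v = 1 & simplex [set v | x v != 0]].

(* the affine extension |f| of a vertex map f (linear on each simplex) *)
Definition realize_map (R : realType) (T : finType) (f : T -> T)
    (x : {ffun T -> R}) : {ffun T -> R} :=
  [ffun w => \sum_(v | f v == w) x v].

(* Main.v *)
Require Import Defs.
From HB Require Import structures.
From mathcomp Require Import all_boot all_order all_algebra.
From mathcomp Require Import reals.
Import GRing.Theory.
Set Implicit Arguments. Unset Strict Implicit. Unset Printing Implicit Defensive.

Section Aux.
Variables (E : finType) (M : oriented_matroid E).
Local Notation rh := (@rho E).

Lemma negvK (X : signvec E) : negv (negv X) = X.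
Proof. by apply/ffunP => e; rewrite !ffunE; case: (X e) => [[]|]. Qed.

Lemma topes_neg T : T \in topes M -> negv T \in topes M.
Proof.
rewrite /topes !inE => /andP[Tc /forall_inP H].
rewrite om_neg //=; apply/forall_inP => X Xc; apply/implyP => le.
have : conf_le T (negv X).
  apply/forallP => e; move/forallP: le => /(_ e); rewrite !ffunE.
  by case: (T e) => [[]|]; case: (X e) => [[]|].
move/implyP: (H _ (om_neg Xc)) => H' /H' /eqP <-.
by rewrite negvK.
Qed.

Lemma topes_supp T T' : T \in topes M -> T' \in topes M ->
  forall e, (T e == None) = (T' e == None).
Proof.
have key : forall T T', T \in topes M -> T' \in topes M ->
    forall e, T e == None -> T' e == None.
  move=> A B; rewrite /topes !inE => /andP[Ac /forall_inP H] /andP[Bc _] e.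
  have Cc := om_comp Ac Bc.
  have le : conf_le A (compv A B).
    rewrite /conf_le.
    by apply/forallP => f; rewrite ffunE; case: (A f) => [b|]; rewrite ?eqxx ?orbT.
  move/implyP: (H _ Cc) => /(_ le) /eqP Ceq.
  move/eqP => Ae; have := congr1 (fun F : signvec E => F e) Ceq.
  by rewrite /= ffunE Ae; move=> ->.
move=> TT TT' e; apply/idP/idP; exact: key.
Qed.

Lemma rho_QV p : p \in QV M -> rh p \in QV M.
Proof.
by case: p => a b; rewrite /QV !in_setX /= => /andP[ha hb]; rewrite topes_neg.
Qed.

Definition sepb (x y : option bool) := (x != None) && (x == omap negb y).
Definition loc (t r t' r' : option bool) :=
  (sepb t' t ==> sepb t' r) && (sepb t' r ==> sepb t' r').

Lemma qle_forall (p q : signvec E * signvec E) :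
  Qle p q = [forall e, loc (p.1 e) (p.2 e) (q.1 e) (q.2 e)].
Proof.
apply/andP/forallP => [[/subsetP H1 /subsetP H2] e | H].
  apply/andP; split; apply/implyP => h.
    by have := H1 e; rewrite !inE; apply.
  by have := H2 e; rewrite !inE; apply.
split; apply/subsetP => e; move: (H e) => /andP[h1 h2]; rewrite !inE.
  exact: (implyP h1).
exact: (implyP h2).
Qed.

Lemma loc_rho (t r t' r' : option bool) :
  (t == None) = (t' == None) -> (r == None) = (t' == None) ->
  (r' == None) = (t' == None) ->
  loc t r t' r' = loc (omap negb r') t' (omap negb r) t.
Proof.
by case: t => [[]|]; case: r => [[]|]; case: t' => [[]|]; case: r' => [[]|].
Qed.

Lemma qle_rho p q : p \in QV M -> q \in QV M ->
  Qle (rh p) (rh q) = Qle q p.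
Proof.
case: p => a b; case: q => c d; rewrite /QV !in_setX /= => /andP[ha hb] /andP[hc hd].
rewrite !qle_forall; apply: eq_forallb => e /=.
rewrite !ffunE (@loc_rho (c e) (d e) (a e) (b e)) //.
- exact: topes_supp.
- exact: topes_supp.
- exact: topes_supp.
Qed.

Lemma chain_rho (C : {set signvec E * signvec E}) : C \subset QV M -> is_chain M (rh @: C) = is_chain M C.
Proof.
move=> CQ; rewrite /is_chain CQ.
have -> : rh @: C \subset QV M.
  by apply/subsetP => _ /imsetP[p pC ->]; apply: rho_QV; exact: (subsetP CQ).
rewrite /=; apply/forall_inP/forall_inP => H p pC.
  apply/forall_inP => q qC.
  have := forall_inP (H _ (imset_f rh pC)) _ (imset_f rh qC).
  rewrite !qle_rho ?(subsetP CQ) //; by rewrite orbC.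
case/imsetP: pC => p0 p0C ->; apply/forall_inP => _ /imsetP[q0 q0C ->].
rewrite !qle_rho ?(subsetP CQ) // orbC.
exact: (forall_inP (H _ p0C) _ q0C).
Qed.

Lemma rho4 (p : signvec E * signvec E) : iter 4 rh p = p.
Proof. by case: p => a b; rewrite /= /rho /= !negvK. Qed.

Lemma iter_mod k (p : signvec E * signvec E) : iter (k %% 4) rh p = iter k rh p.
Proof.
rewrite {2}(divn_eq k 4) addnC iterD; congr (iter _ rh _).
move: (k %/ 4) => q; elim: q p => [//|q IH] p.
by rewrite mulSn iterD rho4.
Qed.

Lemma rho_inj : injective rh.
Proof. by case=> a b [c d] [/(congr1 (@negv E))]; rewrite !negvK => -> ->. Qed.

Lemma iter_rho_inj k : injective (iter k rh).
Proof. elim: k => [//|k IH] x y /= /rho_inj; exact: IH. Qed.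

Lemma chain_iter k (C : {set signvec E * signvec E}) : C \subset QV M ->
  (iter k rh @: C \subset QV M) && (is_chain M (iter k rh @: C) == is_chain M C).
Proof.
move=> CQ; elim: k => [|k /andP[IH1 /eqP IH2]].
  by rewrite /= (eq_imset _ (fun x => erefl x)) imset_id CQ eqxx.
have -> : iter k.+1 rh @: C = rh @: (iter k rh @: C).
  by rewrite -imset_comp.
rewrite chain_rho // IH2 eqxx andbT.
by apply/subsetP => _ /imsetP[p pC ->]; apply: rho_QV; exact: (subsetP IH1).
Qed.

Definition rinv (n : 'Z_4) := iter (4 - n) rh.

Lemma rinvK (n : 'Z_4) : cancel (rho_act n) (rinv n).
Proof.
move=> p; rewrite /rinv /rho_act -iterD subnK ?rho4 //.
by case: n => n /= /ltnW.
Qed.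

Lemma rinvK' (n : 'Z_4) : cancel (rinv n) (rho_act n).
Proof.
move=> p; rewrite /rinv /rho_act -iterD addnC subnK ?rho4 //.
by case: n => n /= /ltnW.
Qed.

Local Open Scope ring_scope.

Lemma realize_bij (R : realType) (f g : signvec E * signvec E -> signvec E * signvec E)
   (x : {ffun signvec E * signvec E -> R}) :
  cancel f g -> cancel g f -> realize_map f x = [ffun w => x (g w)].
Proof.
move=> fK gK; apply/ffunP => w; rewrite !ffunE (big_pred1 (g w)) // => v /=.
apply/eqP/eqP => [<-|->]; by rewrite ?fK ?gK.
Qed.

End Aux.

Local Open Scope ring_scope.

Theorem theorem3p15 (E : finType) (M : oriented_matroid E) :
  (* each rho^n is a simplicial automorphism of Delta(Q) *)
  (forall n : 'Z_4,
     simplicial_automorphism (QV M) (is_chain M) (rho_act n)) /\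
  (* n |-> rho^n is an action of Z_4 on Delta(Q) *)
  {in QV M, rho_act (0 : 'Z_4)%R =1 id} /\
  (forall m n : 'Z_4, {in QV M, rho_act (m + n)%R =1 rho_act m \o rho_act n}) /\
  (* hence a simplicial action of Z_4 on |Q| *)
  (forall (R : realType) (n : 'Z_4) (x : {ffun (signvec E * signvec E) -> R}),
     in_realization (is_chain M) x ->
     in_realization (is_chain M) (realize_map (rho_act n) x)) /\
  (forall (R : realType) (x : {ffun (signvec E * signvec E) -> R}),
     in_realization (is_chain M) x -> realize_map (rho_act (0 : 'Z_4)%R) x = x) /\
  (forall (R : realType) (m n : 'Z_4) (x : {ffun (signvec E * signvec E) -> R}),
     in_realization (is_chain M) x ->
     realize_map (rho_act (m + n)%R) x
       = realize_map (rho_act m) (realize_map (rho_act n) x)).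
Proof.
have addE : forall (m n : 'Z_4) (p : signvec E * signvec E),
    @rho_act E (m + n)%R p = @rho_act E m (@rho_act E n p).
  move=> m n p; rewrite /rho_act; have := @iter_mod E (m + n)%N p; rewrite iterD; exact.
split.
  move=> n; split.
  - move=> p pQ; rewrite /rho_act; elim: (nat_of_ord n) => [//|k IH] /=.
    exact: rho_QV.
  - by move=> p q _ _; apply: iter_rho_inj.
  - by move=> C CQ; case/andP: (chain_iter n CQ) => _ /eqP.
split; first by [].
split; first by move=> m n p _; rewrite addE.
split.
  move=> R n x [x0 x1 xc]; rewrite (realize_bij _ (rinvK n) (rinvK' n)).
  split.
  - by move=> v; rewrite ffunE.
  - rewrite -x1 [RHS](reindex_inj (can_inj (rinvK' n))); apply: eq_bigr => v _.
    by rewrite ffunE.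
  - have -> : [set v | [ffun w => x (rinv n w)] v != 0] = rho_act n @: [set v | x v != 0].
      apply/setP => w; rewrite !inE ffunE; apply/idP/imsetP => [h|[v]].
        by exists (rinv n w); rewrite ?inE ?rinvK'.
      by rewrite inE => h ->; rewrite rinvK.
    have CQ : [set v | x v != 0] \subset QV M by case/andP: xc.
    by case/andP: (chain_iter n CQ) => _ /eqP ->.
split.
  move=> R x _; apply/ffunP => w; rewrite ffunE (big_pred1 w) // => v.
move=> R m n x _.
have -> : realize_map (rho_act (m + n)) x = realize_map (rho_act m \o rho_act n) x.
  by apply/ffunP => w; rewrite !ffunE; apply: eq_bigl => v; rewrite /= addE.
rewrite (realize_bij _ (rinvK n) (rinvK' n)) (realize_bij _ (rinvK m) (rinvK' m)).
have c1 : cancel (@rho_act E m \o @rho_act E n) (@rinv E n \o @rinv E m).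
  move=> p; change (rinv n (rinv m (rho_act m (rho_act n p))) = p).
  by rewrite rinvK rinvK.
have c2 : cancel (@rinv E n \o @rinv E m) (@rho_act E m \o @rho_act E n).
  move=> p; change (rho_act m (rho_act n (rinv n (rinv m p))) = p).
  by rewrite rinvK' rinvK'.
apply: etrans (realize_bij x c1 c2) _.
by apply/ffunP => w; rewrite !ffunE.
Qed.
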